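(* Let $B=\bigoplus_{i\in\mathbb{Z}}B_i$ be a $\mathbb{Z}$-graded integral domain with $e(B)=1$. (a) If $S\subseteq\mathbb{Z}\setminus\{0\}$ is such that no height-$1$ prime ideal of $B$ contains $\bigcup_{i\in S}B_i$, then every element of $\Pi(B)$ is a prime factor of some element of $S$. (b) If no height-$1$ prime ideal of $B$ contains $\bigcup_{i\in\mathbb{Z}\setminus\{0\}}B_i$ and $B$ is noetherian, then $\Pi(B)$ is finite. (c) If some height-$1$ prime ideal of $B$ contains $\bigcup_{i\in\mathbb{Z}\setminus\{0\}}B_i$, then $\Pi(B)$ is the set of all prime numbers and $\Pi^*(B)=\{1\}$.
   Context: For a $\mathbb{Z}$-graded domain $C$, $e(C)=\gcd\{i\in\mathbb{Z}:C_i\neq0\}$. $\Pi(B)$ is the set of primes $p$ with $p\mid e(B/\mathfrak{p})$ for some homogeneous height-$1$ prime ideal $\mathfrak{p}$ of $B$; $\Pi^*(B)$ is the set of positive integers not divisible by any element of $\Pi(B)$. *)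

(* Defs.v *)
From HB Require Import structures.
From mathcomp Require Import all_boot all_order all_algebra.
Set Implicit Arguments. Unset Strict Implicit. Unset Printing Implicit Defensive.
Import Order.TTheory GRing.Theory Num.Theory.
Local Open Scope ring_scope.

(* A Z-grading B = (+)_{i in Z} B_i of a commutative ring B: the component
   B_i is given by the predicate [gcomp i]. *)
Record grading (B : comNzRingType) := Grading {
  gcomp : int -> B -> Prop;
  gcomp0 : forall i, gcomp i 0;
  gcompB : forall i x y, gcomp i x -> gcomp i y -> gcomp i (x - y);
  gcompM : forall i j x y, gcomp i x -> gcomp j y -> gcomp (i + j) (x * y);
  gcomp_span : forall x : B, exists (s : seq int) (f : int -> B),
      (forall i, gcomp i (f i)) /\ x = \sum_(i <- s) f i;
  gcomp_direct : forall (s : seq int) (f : int -> B), uniq s ->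
      (forall i, gcomp i (f i)) -> \sum_(i <- s) f i = 0 ->
      forall i, i \in s -> f i = 0
}.

Definition is_ideal (B : comNzRingType) (I : B -> Prop) : Prop :=
  I 0 /\ (forall x y, I x -> I y -> I (x - y)) /\ (forall a x, I x -> I (a * x)).

Definition is_prime_ideal (B : comNzRingType) (P : B -> Prop) : Prop :=
  is_ideal P /\ ~ P 1 /\ (forall x y, P (x * y) -> P x \/ P y).

Definition strict_subset (B : Type) (P Q : B -> Prop) : Prop :=
  (forall x, P x -> Q x) /\ exists x, Q x /\ ~ P x.

Definition is_height_one_prime (B : comNzRingType) (P : B -> Prop) : Prop :=
  is_prime_ideal P /\
  (exists Q, is_prime_ideal Q /\ strict_subset Q P) /\
  ~ (exists Q1 Q2, is_prime_ideal Q1 /\ is_prime_ideal Q2 /\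
        strict_subset Q1 Q2 /\ strict_subset Q2 P).

Definition is_homogeneous_ideal (B : comNzRingType) (G : grading B) (P : B -> Prop) :=
  is_ideal P /\
  forall x (s : seq int) (f : int -> B), P x -> uniq s ->
    (forall i, gcomp G i (f i)) -> x = \sum_(i <- s) f i ->
    forall i, i \in s -> P (f i).

Definition noetherian (B : comNzRingType) : Prop :=
  forall I : nat -> B -> Prop, (forall n, is_ideal (I n)) ->
    (forall n x, I n x -> I n.+1 x) ->
    exists N, forall n, (N <= n)%N -> forall x, I n x -> I N x.

Definition is_gcd_set (D : int -> Prop) (g : nat) : Prop :=
  (forall i, D i -> (Posz g %| i)%Z) /\
  (forall d : int, (forall i, D i -> (d %| i)%Z) -> (d %| Posz g)%Z).

Definition degrees (B : comNzRingType) (G : grading B) (i : int) : Prop :=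
  exists x, gcomp G i x /\ x <> 0.

(* degrees i with (B/P)_i <> 0, for the induced grading (B/P)_i = image of B_i *)
Definition quot_degrees (B : comNzRingType) (G : grading B) (P : B -> Prop)
    (i : int) : Prop :=
  exists x, gcomp G i x /\ ~ P x.

Definition Pi (B : comNzRingType) (G : grading B) (p : nat) : Prop :=
  prime p /\ exists P, is_homogeneous_ideal G P /\ is_height_one_prime P /\
    exists g, is_gcd_set (quot_degrees G P) g /\ (p %| g)%N.

Definition Pistar (B : comNzRingType) (G : grading B) (n : nat) : Prop :=
  (0 < n)%N /\ forall p, Pi G p -> ~ (p %| n)%N.

(* Main.v *)
Require Import Defs.
From HB Require Import structures.
From mathcomp Require Import all_boot all_order all_algebra.
From Stdlib Require Import Classical ClassicalEpsilon.
Set Implicit Arguments. Unset Strict Implicit.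
Import Order.TTheory GRing.Theory Num.Theory.
Local Open Scope ring_scope.

Lemma partA (B : idomainType) (G : grading B) (S : int -> Prop) :
  (forall P : B -> Prop, is_height_one_prime P ->
        ~ (forall i x, S i -> gcomp G i x -> P x)) ->
     forall p, Pi G p -> exists i, S i /\ (Posz p %| i)%Z.
Proof.
move=> HS p [pp [P [Hh [H1 [g [[Hg _] Hpg]]]]]].
have := HS P H1.
move/not_all_ex_not => [i /not_all_ex_not [x Hx]].
exists i.
have [Si [Gx nPx]] : S i /\ gcomp G i x /\ ~ P x by tauto.
split => //.
apply: dvdz_trans (Hg i (ex_intro _ x (conj Gx nPx))).
by rewrite dvdzE /=.
Qed.

Definition Jid (B : idomainType) (G : grading B) (D : seq int) (x : B) : Prop :=
  forall I : B -> Prop, is_ideal I -> (forall d y, d \in D -> gcomp G d y -> I y) -> I x.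

Lemma Jid_ideal (B : idomainType) (G : grading B) D : is_ideal (Jid G D).
Proof.
split; [|split].
- by move=> I [I0 _] _.
- move=> x y Hx Hy I HI HD; have [_ [HB _]] := HI; exact: HB (Hx I HI HD) (Hy I HI HD).
- move=> a x Hx I HI HD; have [_ [_ HM]] := HI; exact: HM (Hx I HI HD).
Qed.

Definition step (B : idomainType) (G : grading B) (D : seq int) : seq int :=
  match excluded_middle_informative
     (exists i : int, i <> 0 /\ exists x, gcomp G i x /\ ~ Jid G D x) with
  | left h => proj1_sig (constructive_indefinite_description _ h) :: D
  | right _ => D
  end.

Lemma nz_iter (B : idomainType) (G : grading B) n :
  forall i, i \in iter n (step G) [::] -> i <> 0.
Proof.
elim: n => [//|n IH] i /=.
rewrite /step; case: excluded_middle_informative => // h.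
case: constructive_indefinite_description => j [Hj _] /=.
rewrite inE => /orP [/eqP -> //|]; exact: IH.
rewrite /= in IH *. move=> Hi; exact: IH Hi.
Qed.

Lemma Jid_mono (B : idomainType) (G : grading B) D D' :
  {subset D <= D'} -> forall x, Jid G D x -> Jid G D' x.
Proof.
move=> sub x Hx I HI HD; apply: Hx => // d y dD; apply: HD; exact: sub.
Qed.

Theorem lemma3p12 (B : idomainType) (G : grading B)
  (He : is_gcd_set (degrees G) 1) :
  (forall S : int -> Prop, (forall i, S i -> i <> 0) ->
     (forall P : B -> Prop, is_height_one_prime P ->
        ~ (forall i x, S i -> gcomp G i x -> P x)) ->
     forall p, Pi G p -> exists i, S i /\ (Posz p %| i)%Z)
  /\
  ((forall P : B -> Prop, is_height_one_prime P ->
        ~ (forall i x, i <> 0 -> gcomp G i x -> P x)) ->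
     noetherian B ->
     exists s : seq nat, forall p, Pi G p -> p \in s)
  /\
  ((exists P : B -> Prop, is_height_one_prime P /\
        (forall i x, i <> 0 -> gcomp G i x -> P x)) ->
     (forall p, prime p -> Pi G p) /\ (forall n, Pistar G n <-> n = 1%N)).
Proof.
split; first by move=> S _; exact: partA.
split.
- move=> Hb Hn.
  pose Dn n := iter n (step G) [::].
  have [N HN] := Hn (fun n => Jid G (Dn n)) (fun n => Jid_ideal G (Dn n))
    (fun n => Jid_mono (D:=Dn n) (D':=Dn n.+1) (fun i hi => ltac:(
       rewrite /Dn /= /step; case: excluded_middle_informative => // h;
       by rewrite inE hi orbT))).
  have Hall : forall i x, i <> 0 -> gcomp G i x -> Jid G (Dn N) x.
    move=> i x i0 Gx; apply: NNPP => nJ.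
    have h : exists i : int, i <> 0 /\ exists x, gcomp G i x /\ ~ Jid G (Dn N) x.
      by exists i; split => //; exists x.
    have := HN N.+1 (leqnSn N).
    rewrite /Dn /= /step -/(Dn N).
    case: excluded_middle_informative => // h'.
    case: constructive_indefinite_description => j [_ [y [Gy nJy]]] /= H.
    apply: nJy; apply: H => I HI HD; apply: (HD j) => //; exact: mem_head.
  have : forall p, Pi G p -> exists i, i \in Dn N /\ (Posz p %| i)%Z.
    apply: partA => P HP Hc; apply: (Hb P HP) => i x i0 Gx.
    apply: (Hall i x i0 Gx) => //; first by case: HP => [[]].
  move=> Hp; exists (flatten [seq divisors `|i|%N | i <- Dn N]).
  move=> p /Hp [i [iD Hpi]].
  apply/flattenP; exists (divisors `|i|%N); first by apply: map_f.
  rewrite -dvdn_divisors; last by rewrite absz_gt0; apply/eqP; exact: nz_iter iD.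
  by move: Hpi; rewrite dvdzE.
- move=> [P [HP Hc]].
  have [[HI [Hnot1 Hpr]] _] := HP.
  have [P0 [PB PM]] := HI.
  have PD : forall x y, P x -> P y -> P (x + y).
    move=> x y Px Py; have := PB x (0 - y) Px (PB 0 y P0 Py).
    by rewrite sub0r opprK.
  have Hhom : is_homogeneous_ideal G P.
    split => // x s f Px us Hf Hx i iS.
    have [i0|/eqP i0] := eqVneq i 0; last exact: Hc (Hf i).
    subst i.
    have := Px; rewrite Hx (bigD1_seq 0 iS us) /= => H.
    have Hr : P (\sum_(j <- s | j != 0) f j).
      apply: (big_ind P) => // j /eqP j0; exact: Hc (Hf j).
    have := PB _ _ H Hr; by rewrite addrK.
  have Hq : forall i, quot_degrees G P i -> i = 0.
    move=> i [x [Gx nPx]]; apply: NNPP => i0; exact: nPx (Hc i x i0 Gx).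
  have Hpi : forall p, prime p -> Pi G p.
    move=> p pp; split => //; exists P; split => //; split => //.
    exists 0%N; split; last exact: dvdn0.
    split.
    + by move=> i /Hq ->.
    + by move=> d _; exact: dvdz0.
  split => // n; split.
  + move=> [n0 Hn]; apply: NNPP => n1.
    have n1' : (1 < n)%N by case: n n0 n1 Hn => [|[|n]].
    apply: (Hn (pdiv n)); [exact: Hpi (pdiv_prime n1') | exact: pdiv_dvd].
  + move=> ->; split => // p [pp _]; rewrite dvdn1 => /eqP p1.
    by rewrite p1 in pp.
Qed.
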